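(* Fix integers $e>1$ and $k\ge1$, and let $m>3$ be a vertex of the finite tree $\mathcal{T}_{e,3}^k$. Then the number of children of $m$ in $\mathcal{T}_{e,3}^k$ equals $$\sum_{j=0}^{\lfloor m/2^e\rfloor}\binom{k}{j}\binom{k-j}{m-j\cdot 2^e}.$$
   Context: For integers $b>1$, $e>1$ and a positive integer $n=\sum_{i=0}^{r} d_i b^i$ written in base $b$ (digits $0\le d_i\le b-1$), the $e$-power base-$b$ happy function is $S_{e,b}(n)=\sum_{i=0}^{r} d_i^e$. A positive integer $n$ is $e$-power $b$-happy if $S_{e,b}^{\ell}(n)=1$ for some $\ell\ge 1$. The tree $\mathcal{T}_{e,b}$ has as vertices all $e$-power $b$-happy numbers, with root $1$; a happy number $n\neq 1$ is a child of the vertex $S_{e,b}(n)$. For $k\ge1$, $\mathcal{T}_{e,b}^k$ is the subtree on the happy numbers having at most $k$ digits in base $b$ (i.e. $n<b^k$); thus the children of a vertex $m$ in $\mathcal{T}_{e,b}^k$ are the happy integers $n$ with $1\le n<b^k$, $n\neq1$, and $S_{e,b}(n)=m$. Binomial coefficients $\binom{a}{c}$ are taken to be $0$ when $c<0$ or $c>a$ (including when $a<0$). *)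

(* Defs.v *)
From mathcomp Require Import all_boot.
From mathcomp Require Import boolp.
Set Implicit Arguments. Unset Strict Implicit. Unset Printing Implicit Defensive.

(* base-b digits of n, least significant first (fuel n suffices for b > 1) *)
Fixpoint digits_aux (b fuel n : nat) : seq nat :=
  match fuel with
  | 0 => [::]
  | f.+1 => if n == 0 then [::] else n %% b :: digits_aux b f (n %/ b)
  end.

Definition digits (b n : nat) : seq nat := digits_aux b n n.

Definition S_happy (e b n : nat) : nat := \sum_(d <- digits b n) d ^ e.

Definition happy (e b n : nat) : Prop :=
  0 < n /\ exists l, 0 < l /\ iter l (S_happy e b) n = 1.

Definition children (e b k m : nat) : {set 'I_(b ^ k)} :=
  [set n : 'I_(b ^ k) | [&& 1 <= val n, val n != 1, `[< happy e b n >]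
                          & S_happy e b n == m]].

Definition vertex (e b k m : nat) : Prop := happy e b m /\ m < b ^ k.

(* Main.v *)
Require Import Defs.
From mathcomp Require Import all_boot.
From mathcomp Require Import boolp.
From mathcomp Require Import zify.

Lemma digits_aux_fuel b f1 f2 n : 1 < b -> n <= f1 -> n <= f2 ->
  digits_aux b f1 n = digits_aux b f2 n.
Proof.
move=> hb; elim: f1 f2 n => [|f1 IH] [|f2] n /=.
- by [].
- by rewrite leqn0 => /eqP -> _.
- by move=> _; rewrite leqn0 => /eqP ->.
case: eqP => // /eqP n0 h1 h2; congr (_ :: _); apply: IH.
  have : n %/ b < n by rewrite ltn_Pdiv // lt0n.
  lia.
have : n %/ b < n by rewrite ltn_Pdiv // lt0n.
lia.
Qed.

Lemma digits_rec n : digits 3 n = if n == 0 then [::] else n %% 3 :: digits 3 (n %/ 3).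
Proof.
rewrite /digits; case: n => [|n] //=; congr (_ :: _).
apply: digits_aux_fuel => //.
have : n.+1 %/ 3 < n.+1 by rewrite ltn_Pdiv.
lia.
Qed.

Lemma digits_lt f n x : x \in digits_aux 3 f n -> x < 3.
Proof.
elim: f n => [|f IH] n /=; first by rewrite in_nil.
case: eqP => [_|_]; first by rewrite in_nil.
rewrite inE => /orP [/eqP -> | /IH //]; by rewrite ltn_mod.
Qed.

Definition G (F : nat -> nat) n := \sum_(x <- digits 3 n) F x.

Lemma G_step F q d : F 0 = 0 -> d < 3 -> G F (3 * q + d) = F d + G F q.
Proof.
move=> F0 hd; rewrite /G digits_rec.
case: eqP => [h|h].
  have -> : q = 0 by lia.
  have -> : d = 0 by lia.
  by rewrite F0 /digits /= big_nil.
rewrite big_cons; congr (F _ + _).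
  by rewrite mulnC modnMDl modn_small.
by rewrite mulnC divnMDl // divn_small // addn0.
Qed.

Lemma G0 F : G F 0 = 0.
Proof. by rewrite /G /digits /= big_nil. Qed.

Lemma split3 (P : nat -> nat) a :
  \sum_(0 <= n < 3 * a) P n = \sum_(0 <= q < a) (P (3 * q + 0) + P (3 * q + 1) + P (3 * q + 2)).
Proof.
elim: a => [|a IH]; first by rewrite muln0 !big_geq.
have -> : 3 * a.+1 = (3 * a).+2.+1 by lia.
rewrite big_nat_recr // big_nat_recr // big_nat_recr // IH big_nat_recr //=.
by rewrite addn0 addn1 addn2 !addnA.
Qed.
Definition N1 := G (fun x => nat_of_bool (x == 1)).
Definition N2 := G (fun x => nat_of_bool (x == 2)).
Definition H k i j := \sum_(0 <= n < 3 ^ k) nat_of_bool ((N1 n == i) && (N2 n == j)).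
Definition B k i j := 'C(k, j) * 'C(k - j, i).

Lemma N1s q d : d < 3 -> N1 (3 * q + d) = (d == 1) + N1 q.
Proof. by move=> hd; rewrite /N1 G_step. Qed.
Lemma N2s q d : d < 3 -> N2 (3 * q + d) = (d == 2) + N2 q.
Proof. by move=> hd; rewrite /N2 G_step. Qed.

Lemma H_step k i j : H k.+1 i j =
  H k i j + (if i is i'.+1 then H k i' j else 0) + (if j is j'.+1 then H k i j' else 0).
Proof.
case: i => [|i]; case: j => [|j]; rewrite ?addn0 /H expnS split3 -?big_split /=;
  apply: eq_bigr => q _;
  rewrite !N1s // !N2s // /= !add0n ?addn0 ?add1n ?eqSS ?andbF ?addn0 //.
Qed.

Lemma B_step k i j : B k.+1 i j =
  B k i j + (if i is i'.+1 then B k i' j else 0) + (if j is j'.+1 then B k i j' else 0).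
Proof.
rewrite /B; case: i => [|i]; case: j => [|j]; rewrite ?bin0 ?subn0 ?muln1 ?mul1n ?addn0 ?subSS.
- by [].
- by rewrite binS.
- by rewrite binS.
case: (ltnP j k) => hj.
  by rewrite binS -(subnSK hj) binS mulnDl mulnDr.
rewrite (@bin_small k j.+1) ?ltnS // !mul0n !add0n.
have -> : k - j = 0 by lia.
by rewrite bin0n /= !muln0.
Qed.

Lemma H_B k i j : H k i j = B k i j.
Proof.
elim: k i j => [|k IH] i j.
  rewrite /H /B expn0 big_nat1 /N1 /N2 !G0.
  by case: i => [|i]; case: j => [|j].
rewrite H_step B_step.
by case: i => [|i]; case: j => [|j]; rewrite !IH.
Qed.

Lemma S_G e n : S_happy e 3 n = G (fun x => x ^ e) n.
Proof. by []. Qed.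

Lemma S_N e n : 0 < e -> S_happy e 3 n = N1 n + N2 n * 2 ^ e.
Proof.
move=> he; rewrite /S_happy /N1 /N2 /G big_distrl -big_split /=.
apply: eq_big_seq => x; rewrite /digits => /digits_lt.
case: x => [|[|[|x]]] // _.
- by rewrite exp0n.
- by rewrite exp1n.
- by rewrite /= mul1n.
Qed.

Lemma sum_ind N a b : \sum_(0 <= j < N) ((j == a) * b) = (a < N) * b.
Proof.
elim: N => [|N IH]; first by rewrite big_geq.
rewrite big_nat_recr //= IH ltnS.
by case: (ltngtP a N) => [h|h|h] /=; rewrite ?mul0n ?mul1n ?addn0.
Qed.

Lemma point e m n : 0 < e ->
  nat_of_bool (S_happy e 3 n == m) =
  \sum_(0 <= j < (m %/ 2 ^ e).+1) nat_of_bool ((N1 n == m - j * 2 ^ e) && (N2 n == j)).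
Proof.
move=> he.
rewrite (eq_bigr (fun j => (j == N2 n) * nat_of_bool (N1 n == m - N2 n * 2 ^ e))); last first.
  move=> j _; case: (eqVneq j (N2 n)) => [->|ne]; first by rewrite andbT mul1n.
  by rewrite andbF mul0n.
rewrite (sum_ind (m %/ 2 ^ e).+1 (N2 n)) ltnS leq_divRL ?expn_gt0 // S_N //.
have c0 : 0 < 2 ^ e by rewrite expn_gt0.
move: (N1 n) (N2 n) (2 ^ e) c0 => x y c _.
case: (leqP (y * c) m) => h; case: eqP => h1; case: eqP => h2 //=; lia.
Qed.

Lemma member e m n : 0 < e -> 3 < m -> happy e 3 m ->
  [&& 1 <= n, n != 1, `[< happy e 3 n >] & S_happy e 3 n == m] = (S_happy e 3 n == m).
Proof.
move=> he m3 [_ [l [hl hl1]]].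
case: (eqVneq (S_happy e 3 n) m) => hS; last by rewrite !andbF.
have n0 : 0 < n.
  case: n hS => // hS; move: hS; rewrite S_G G0; lia.
have n1 : n != 1.
  apply/eqP => h; move: hS; rewrite h S_G (@G_step _ 0 1) ?exp0n // G0 exp1n; lia.
rewrite n0 n1 asboolT //; split => //.
by exists l.+1; split => //; rewrite iterSr hS.
Qed.

Theorem mainTheorem4 (e k m : nat) :
  1 < e -> 1 <= k -> vertex e 3 k m -> 3 < m ->
  #|children e 3 k m| =
    \sum_(0 <= j < (m %/ 2 ^ e).+1) 'C(k, j) * 'C(k - j, m - j * 2 ^ e).
Proof.
move=> he _ [hm _] m3.
have e0 : 0 < e by apply: ltnW.
rewrite -sum1_card big_mkcond /=.
rewrite (eq_bigr (fun n : 'I_(3 ^ k) => nat_of_bool (S_happy e 3 n == m))); last first.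
  by move=> i _; rewrite /children inE member //; case: eqP.
rewrite -(big_mkord xpredT (fun n => nat_of_bool (S_happy e 3 n == m))).
rewrite (eq_bigr _ (fun n _ => @point e m n e0)) exchange_big /=.
apply: eq_bigr => j _.
by rewrite -/(H k (m - j * 2 ^ e) j) H_B.
Qed.
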